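(* Assume $\sigma_1$ consists of simple eigenvalues and let $N\ge N_1$ be such that $\lambda_m^k\ne0$ for $|k|\ge N$. For $1\le m\le\ell_1$, $|k|\ge N$ let $\varphi_m^k=((I-e^{-\lambda_m^k}A_{-1})x_m^k,e^{\lambda_m^k\theta}x_m^k)$ and $\psi_m^k=\big(y_m^k,[\overline{\lambda_m^k}e^{-\overline{\lambda_m^k}\theta}-A_2^*(\theta)+e^{-\overline{\lambda_m^k}\theta}\int_0^\theta e^{\overline{\lambda_m^k}s}(A_3^*(s)+\overline{\lambda_m^k}A_2^*(s))ds]y_m^k\big)$, with $x_m^k\in\ker\Delta(\lambda_m^k)$, $y_m^k\in\ker\Delta^*(\overline{\lambda_m^k})$, $\|x_m^k\|=\|y_m^k\|=1$. Then there is a constant $C>0$ such that $\|\varphi_m^k\|_{M_2}\le C$ and $\frac{1}{|\lambda_m^k|}\|\psi_m^k\|_{M_2}\le C$ for all $1\le m\le\ell_1$, $|k|\ge N$.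
   Context: Setting: $n\ge1$, $A_{-1}\in\mathbb C^{n\times n}$, $A_2,A_3\in L_2([-1,0];\mathbb C^{n\times n})$; $M_2=\mathbb C^n\times L_2(-1,0;\mathbb C^n)$ with the product inner product. $\Delta(\lambda)=-\lambda I+\lambda e^{-\lambda}A_{-1}+\lambda\int_{-1}^0e^{\lambda s}A_2(s)ds+\int_{-1}^0e^{\lambda s}A_3(s)ds$, $\Delta^*(\lambda)$ the same with conjugate transposes. Spectral notation: $\mu_1,\dots,\mu_\ell$ distinct eigenvalues of $A_{-1}$ (possibly $\det A_{-1}=0$), $\sigma_1=\sigma(A_{-1})\cap\{|\mu|=1\}=\{\mu_1,\dots,\mu_{\ell_1}\}$; ''$\sigma_1$ consists of simple eigenvalues'' means each $\mu_m$, $m\le\ell_1$, has algebraic multiplicity $1$. $\tilde\lambda_m^k=\mathrm i(\arg\mu_m+2\pi k)$. Known: there are $N_1$ and radii $r^{(k)}$ with $\sum_k(r^{(k)})^2<\infty$ such that for $m\le\ell_1$, $|k|\ge N_1$ the disc of radius $r^{(k)}$ about $\tilde\lambda_m^k$ contains exactly one root (with multiplicity) $\lambda_m^k$ of $\det\Delta$, a simple eigenvalue of the associated operator, with $|\lambda_m^k-\tilde\lambda_m^k|\to0$. *)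

(* Defs.v *)
From HB Require Import structures.
From mathcomp Require Import all_boot all_order all_algebra.
From mathcomp Require Import all_classical all_reals all_analysis.
From mathcomp Require Import complex.

Set Implicit Arguments.
Unset Strict Implicit.
Unset Printing Implicit Defensive.

Import Order.TTheory GRing.Theory Num.Theory.
Local Open Scope classical_set_scope.
Local Open Scope ring_scope.

Definition cabs {R : realType} (z : R[i]) : R := ComplexField.Normc.normc z.

Definition expC {R : realType} (z : R[i]) : R[i] :=
  (expR (complex.Re z))%:C%C * Complex (cos (complex.Im z)) (sin (complex.Im z)).

(* principal argument, with values in (-pi, pi] *)
Definition argC {R : realType} (z : R[i]) : R :=
  if 0 <= complex.Im z then acos (complex.Re z / cabs z) else - acos (complex.Re z / cabs z).

Definition RtoC {R : realType} (t : R) : R[i] := Complex t 0.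

Definition intC {R : realType} (a b : R) (f : R -> R[i]) : R[i] :=
  Complex (Rintegral lebesgue_measure `[a, b] (fun t => complex.Re (f t)))
          (Rintegral lebesgue_measure `[a, b] (fun t => complex.Im (f t))).

Definition intM {R : realType} (n : nat) (a b : R) (F : R -> 'M[R[i]]_n)
  : 'M[R[i]]_n := \matrix_(i, j) intC a b (fun t => F t i j).

(* oriented integral  \int_0^t F(s) ds  for t <= 0, i.e. - \int_[t,0] *)
Definition intM0 {R : realType} (n : nat) (t : R) (F : R -> 'M[R[i]]_n)
  : 'M[R[i]]_n := - intM t 0 F.

Definition adjM {R : realType} (n : nat) (A : 'M[R[i]]_n) : 'M[R[i]]_n :=
  (map_mx conjc A)^T.

Definition measC {R : realType} (f : R -> R[i]) : Prop :=
  measurable_fun `[(-1 : R)%R, 0%R] (fun t => complex.Re (f t)) /\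
  measurable_fun `[(-1 : R)%R, 0%R] (fun t => complex.Im (f t)).

Definition L2fun {R : realType} (f : R -> R[i]) : Prop :=
  measC f /\
  (\int[lebesgue_measure]_(t in `[(-1 : R)%R, 0%R]) ((cabs (f t)) ^+ 2)%:E < +oo)%E.

Definition L2mx {R : realType} (n : nat) (A : R -> 'M[R[i]]_n) : Prop :=
  forall i j, L2fun (fun t => A t i j).

Definition Delta {R : realType} (n : nat) (Am1 : 'M[R[i]]_n)
  (A2 A3 : R -> 'M[R[i]]_n) (l : R[i]) : 'M[R[i]]_n :=
  - (l%:M) + (l * expC (- l)) *: Am1
  + l *: intM (-1) 0 (fun s => expC (l * RtoC s) *: A2 s)
  + intM (-1) 0 (fun s => expC (l * RtoC s) *: A3 s).

Definition DeltaS {R : realType} (n : nat) (Am1 : 'M[R[i]]_n)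
  (A2 A3 : R -> 'M[R[i]]_n) (l : R[i]) : 'M[R[i]]_n :=
  Delta (adjM Am1) (fun s => adjM (A2 s)) (fun s => adjM (A3 s)) l.

Definition vnorm {R : realType} (n : nat) (v : 'cV[R[i]]_n) : R :=
  Num.sqrt (\sum_i (cabs (v i 0)) ^+ 2).

(* squared norm in M_2 = C^n x L_2(-1,0;C^n) of the pair (v, f) *)
Definition M2sq {R : realType} (n : nat) (v : 'cV[R[i]]_n)
  (f : R -> 'cV[R[i]]_n) : \bar R :=
  (((vnorm v) ^+ 2)%:E +
   \int[lebesgue_measure]_(t in `[(-1 : R)%R, 0%R]) (((vnorm (f t)) ^+ 2)%:E))%E.

Definition tlam {R : realType} (mu : R[i]) (k : int) : R[i] :=
  Complex 0 (argC mu + 2 * pi * k%:~R).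

Definition phi_v {R : realType} (n : nat) (Am1 : 'M[R[i]]_n) (l : R[i])
  (x : 'cV[R[i]]_n) : 'cV[R[i]]_n :=
  (1%:M - expC (- l) *: Am1) *m x.

Definition phi_f {R : realType} (n : nat) (l : R[i]) (x : 'cV[R[i]]_n)
  : R -> 'cV[R[i]]_n :=
  fun t => expC (l * RtoC t) *: x.

Definition psi_f {R : realType} (n : nat) (A2 A3 : R -> 'M[R[i]]_n)
  (l : R[i]) (y : 'cV[R[i]]_n) : R -> 'cV[R[i]]_n :=
  fun t =>
    let lb := conjc l in
    (((lb * expC (- lb * RtoC t)) *: 1%:M) - adjM (A2 t)
     + expC (- lb * RtoC t) *:
         intM0 t (fun s => expC (lb * RtoC s) *:
                             (adjM (A3 s) + lb *: adjM (A2 s)))) *m y.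

(* z is a root of multiplicity exactly one of f : C -> C (f complex
   differentiable at z with nonzero derivative) *)
Definition simple_rootC {R : realType} (f : R[i] -> R[i]) (z : R[i]) : Prop :=
  f z = 0 /\
  exists d : R[i], d != 0 /\
    forall eps : R, 0 < eps -> exists delta : R, 0 < delta /\
      forall h : R[i], 0 < cabs h < delta ->
        cabs ((f (z + h) - f z) / h - d) < eps.

(* Main.v *)
Require Import Defs.
From HB Require Import structures.
From mathcomp Require Import all_boot all_order all_algebra.
From mathcomp Require Import all_classical all_reals all_analysis.
From mathcomp Require Import complex.
From mathcomp Require Import ring lra zify measurable_realfun.
Import Order.TTheory GRing.Theory Num.Theory.
Local Open Scope classical_set_scope.
Local Open Scope ring_scope.

Lemma cabs_ge0 {R : realType} (z : R[i]) : 0 <= cabs z.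
Proof. by case: z => a b; rewrite /cabs /=; exact: sqrtr_ge0. Qed.

Lemma cabs_sqr {R : realType} (z : R[i]) :
  cabs z ^+ 2 = complex.Re z ^+ 2 + complex.Im z ^+ 2.
Proof. by case: z => a b; rewrite /cabs /= sqr_sqrtr // addr_ge0 // sqr_ge0. Qed.

Lemma cabsM {R : realType} (a b : R[i]) : cabs (a * b) = cabs a * cabs b.
Proof. exact: ComplexField.Normc.normcM. Qed.

Lemma cabsD {R : realType} (a b : R[i]) : cabs (a + b) <= cabs a + cabs b.
Proof. exact: (@le_normcD R a b). Qed.

Lemma cabsN {R : realType} (a : R[i]) : cabs (- a) = cabs a.
Proof. exact: (@normcN R a). Qed.

Lemma cabsB {R : realType} (a b : R[i]) : cabs (a - b) <= cabs a + cabs b.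
Proof. by rewrite -(cabsN b); exact: cabsD. Qed.

Lemma sqr_le_abs {R : realType} (a s : R) : 0 <= s -> a ^+ 2 <= s ^+ 2 -> `|a| <= s.
Proof.
move=> s0 h; have := normr_ge0 a; have e : `|a| ^+ 2 = a ^+ 2 by rewrite real_normK ?num_real.
rewrite -e in h; move=> a0.
by rewrite -(ler_pXn2r (n:=2)) // inE.
Qed.

Lemma Re_le {R : realType} (z : R[i]) : `|complex.Re z| <= cabs z.
Proof. apply: sqr_le_abs; first exact: cabs_ge0. rewrite cabs_sqr; have := sqr_ge0 (complex.Im z); lra. Qed.

Lemma Im_le {R : realType} (z : R[i]) : `|complex.Im z| <= cabs z.
Proof. apply: sqr_le_abs; first exact: cabs_ge0. rewrite cabs_sqr; have := sqr_ge0 (complex.Re z); lra. Qed.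

Lemma cabs_complex {R : realType} (a b : R) : cabs (Complex a b) <= `|a| + `|b|.
Proof.
rewrite /cabs /= -[X in X <= _](ger0_norm (sqrtr_ge0 _)); apply: sqr_le_abs.
  by rewrite addr_ge0.
rewrite sqr_sqrtr ?addr_ge0 ?sqr_ge0 // sqrrD !real_normK ?num_real //.
have := mulr_ge0 (normr_ge0 a) (normr_ge0 b); lra.
Qed.

Lemma cabs_conj {R : realType} (z : R[i]) : cabs (conjc z) = cabs z.
Proof. by case: z => a b; rewrite /cabs /= sqrrN. Qed.

Lemma cabs_expC {R : realType} (z : R[i]) : cabs (expC z) = expR (complex.Re z).
Proof.
have h1 (x : R) : cabs ((x%:C)%C) = `|x|.
  by rewrite /cabs /= expr0n addr0 sqrtr_sqr.
have h2 (a b : R) : cabs (Complex a b) = Num.sqrt (a ^+ 2 + b ^+ 2) by [].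
rewrite /expC cabsM h1 h2 cos2Dsin2 sqrtr1 mulr1.
by rewrite ger0_norm // expR_ge0.
Qed.

Lemma cabs_sum {R : realType} (I : Type) (s : seq I) (P : pred I) (F : I -> R[i]) :
  cabs (\sum_(i <- s | P i) F i) <= \sum_(i <- s | P i) cabs (F i).
Proof.
apply: (big_ind2 (fun a b => cabs a <= b)).
- by rewrite /cabs /= expr0n /= addr0 sqrtr0.
- by move=> x1 x2 y1 y2 h1 h2; apply: le_trans (cabsD _ _) _; exact: lerD.
- by [].
Qed.

Lemma cabs_nat1 {R : realType} (b : bool) : cabs ((1 : R[i]) *+ b) <= 1.
Proof. case: b => /=; rewrite /cabs /= ?expr0n /= ?expr1n ?addr0 ?sqrtr1 ?sqrtr0 //. Qed.

Lemma Re_mulRtoC {R : realType} (l : R[i]) t : complex.Re (l * RtoC t) = complex.Re l * t.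
Proof. by case: l => a b; rewrite /RtoC /= mulr0 subr0. Qed.

Lemma expC_bound {R : realType} (l : R[i]) (t rho : R) :
  `|complex.Re l| <= rho -> -1 <= t <= 0 -> cabs (expC (l * RtoC t)) <= expR rho.
Proof.
move=> hl /andP[t1 t0]; rewrite cabs_expC Re_mulRtoC ler_expR.
apply: le_trans (ler_norm _) _; rewrite normrM.
have : `|t| <= 1 by rewrite ler_norml; apply/andP; split; lra.
move=> t1'; rewrite -[rho]mulr1; apply: ler_pM => //; exact: normr_ge0.
Qed.

Lemma cross_le {R : realType} (I : Type) (s : seq I) (F : I -> R) (x : R) :
  2 * x * \sum_(i <- s) F i <= (size s)%:R * x ^+ 2 + \sum_(i <- s) F i ^+ 2.
Proof.
elim: s => [|a s IH]; first by rewrite !big_nil mulr0 mul0r addr0.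
rewrite !big_cons /=.
have h : 2 * x * F a <= x ^+ 2 + F a ^+ 2.
  have := sqr_ge0 (x - F a); rewrite sqrrB; lra.
move: IH h; set S := \sum_(i <- s) F i; set Q := \sum_(i <- s) F i ^+ 2.
set k := (size s)%:R; move=> IH h.
have -> : (size s).+1%:R = k + 1 :> R by rewrite /k -[(size s).+1]addn1 natrD.
have -> : 2 * x * (F a + S) = 2 * x * F a + 2 * x * S by ring.
lra.
Qed.

Lemma sqr_sum_le {R : realType} (I : Type) (s : seq I) (F : I -> R) :
  (\sum_(i <- s) F i) ^+ 2 <= (size s)%:R * \sum_(i <- s) F i ^+ 2.
Proof.
elim: s => [|a s IH]; first by rewrite !big_nil mulr0 expr0n.
rewrite !big_cons /=.
have h := cross_le _ s F (F a).
move: IH h; set S := \sum_(i <- s) F i; set Q := \sum_(i <- s) F i ^+ 2.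
set k := (size s)%:R; move=> IH h.
have -> : (size s).+1%:R = k + 1 :> R by rewrite /k -[(size s).+1]addn1 natrD.
have -> : (F a + S) ^+ 2 = F a ^+ 2 + 2 * F a * S + S ^+ 2 by ring.
have -> : (k + 1) * (F a ^+ 2 + Q) = k * F a ^+ 2 + F a ^+ 2 + k * Q + Q by ring.
lra.
Qed.

Lemma sqr_sum_ord {R : realType} (n : nat) (F : 'I_n -> R) :
  (\sum_(i < n) F i) ^+ 2 <= n%:R * \sum_(i < n) F i ^+ 2.
Proof.
have := sqr_sum_le _ (index_enum 'I_n) F.
by rewrite /index_enum -enumT size_enum_ord.
Qed.

Lemma vnorm_sqr {R : realType} (n : nat) (v : 'cV[R[i]]_n) :
  vnorm v ^+ 2 = \sum_i cabs (v i 0) ^+ 2.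
Proof. by rewrite /vnorm sqr_sqrtr // sumr_ge0 // => i _; exact: sqr_ge0. Qed.

Lemma vnorm1_entry {R : realType} (n : nat) (v : 'cV[R[i]]_n) j :
  vnorm v = 1 -> cabs (v j 0) <= 1.
Proof.
move=> h; have : cabs (v j 0) ^+ 2 <= 1.
  rewrite -(expr1n _ 2) -h vnorm_sqr (bigD1 j) //= lerDl.
  by apply: sumr_ge0 => i _; exact: sqr_ge0.
have := cabs_ge0 (v j 0); nra.
Qed.

Lemma vnorm_mul_bound {R : realType} (n : nat) (M : 'M[R[i]]_n) (y : 'cV[R[i]]_n) :
  vnorm y = 1 ->
  vnorm (M *m y) ^+ 2 <= n%:R * \sum_i \sum_j cabs (M i j) ^+ 2.
Proof.
move=> hy; rewrite vnorm_sqr mulr_sumr; apply: ler_sum => i _.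
apply: (le_trans _ (sqr_sum_ord _ (fun j => cabs (M i j)))).
have hle : cabs ((M *m y) i 0) <= \sum_j cabs (M i j); last first.
  by rewrite !expr2; apply: ler_pM => //; exact: cabs_ge0.
rewrite mxE; apply: (le_trans (cabs_sum _ _ _ _)); apply: ler_sum => j _.
rewrite cabsM -[X in _ <= X]mulr1; apply: ler_pM => //; try exact: cabs_ge0.
exact: vnorm1_entry.
Qed.

Lemma vnorm_scale {R : realType} (n : nat) (c : R[i]) (x : 'cV[R[i]]_n) :
  vnorm (c *: x) ^+ 2 = cabs c ^+ 2 * vnorm x ^+ 2.
Proof.
rewrite !vnorm_sqr mulr_sumr; apply: eq_bigr => i _.
by rewrite mxE cabsM exprMn.
Qed.

Lemma le_nnint {R : realType} (D1 D2 : set R) (f1 f2 : R -> \bar R) :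
  (forall x, D1 x -> (0 <= f1 x)%E) -> (forall x, D2 x -> (0 <= f2 x)%E) ->
  (forall x, D1 x -> D2 x /\ (f1 x <= f2 x)%E) ->
  (\int[lebesgue_measure]_(x in D1) f1 x <= \int[lebesgue_measure]_(x in D2) f2 x)%E.
Proof.
move=> h1 h2 h12; rewrite !ge0_integralE //.
apply: ereal_sup_le => _ [h /= hle <-]; exists h => //= x.
apply: (le_trans (hle x)); rewrite /patch; case: ifPn => [/set_mem D1x|_].
  by have [D2x le12] := h12 _ D1x; rewrite mem_set.
by case: ifPn => // /set_mem; exact: h2.
Qed.

Lemma Rint_bound {R : realType} (D : set R) (f : R -> R) (M : R) :
  (\int[lebesgue_measure]_(x in D) (`|f x|)%:E <= M%:E)%E ->
  `|Rintegral lebesgue_measure D f| <= M.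
Proof.
move=> hM; rewrite /Rintegral integralE.
have hp : (0 <= \int[lebesgue_measure]_(x in D) ((EFin \o f) ^\+ x) <= M%:E)%E.
  apply/andP; split; first by apply: integral_ge0 => x _; exact: funepos_ge0.
  apply: le_trans hM; apply: le_nnint => // x Dx; split => //.
  have := congr1 (fun g => g x) (fune_abse (EFin \o f)); rewrite /= => ->.
  by rewrite leeDl //; exact: funeneg_ge0.
have hn : (0 <= \int[lebesgue_measure]_(x in D) ((EFin \o f) ^\- x) <= M%:E)%E.
  apply/andP; split; first by apply: integral_ge0 => x _; exact: funeneg_ge0.
  apply: le_trans hM; apply: le_nnint => // x Dx; split => //.
  have := congr1 (fun g => g x) (fune_abse (EFin \o f)); rewrite /= => ->.
  by rewrite leeDr //; exact: funepos_ge0.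
move: hp hn.
set a := (\int[lebesgue_measure]_(x in D) ((EFin \o f) ^\+ x))%E.
set b := (\int[lebesgue_measure]_(x in D) ((EFin \o f) ^\- x))%E.
move=> /andP[a0 aM] /andP[b0 bM].
have fa : a \is a fin_num by rewrite ge0_fin_numE // (le_lt_trans aM) // ltry.
have fb : b \is a fin_num by rewrite ge0_fin_numE // (le_lt_trans bM) // ltry.
rewrite -(fineK fa) -(fineK fb) in a0 aM b0 bM *.
rewrite -EFinB /= !lee_fin in a0 aM b0 bM *.
rewrite ler_norml; apply/andP; split; lra.
Qed.

Definition Dm {R : realType} : set R := `[(-1 : R)%R, 0%R].
Definition csq {R : realType} (z : R[i]) : R := complex.Re z ^+ 2 + complex.Im z ^+ 2.
Definition Gm {R : realType} (n : nat) (A : R -> 'M[R[i]]_n) (t : R) : R :=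
  \sum_i \sum_j csq (A t i j).
Arguments Gm {R n}.

Lemma csq_ge0 {R : realType} (z : R[i]) : 0 <= csq z.
Proof. by rewrite /csq addr_ge0 // sqr_ge0. Qed.

Lemma Gm_ge0 {R : realType} n (A : R -> 'M[R[i]]_n) t : 0 <= Gm A t.
Proof. by apply: sumr_ge0 => i _; apply: sumr_ge0 => j _; exact: csq_ge0. Qed.

Lemma Gm_entry {R : realType} n (A : R -> 'M[R[i]]_n) t i j :
  cabs (A t i j) ^+ 2 <= Gm A t.
Proof.
rewrite cabs_sqr /Gm (bigD1 i) //= (bigD1 j) //= -addrA lerDl.
apply: addr_ge0; first by apply: sumr_ge0 => k _; exact: csq_ge0.
by apply: sumr_ge0 => k _; apply: sumr_ge0 => l _; exact: csq_ge0.
Qed.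

Lemma le_1sqr {R : realType} (c x : R) : c ^+ 2 <= x -> c <= 1 + x.
Proof. move=> h; have := sqr_ge0 c; have := sqr_ge0 (c - 1); rewrite sqrrB mulr1 expr1n mulr2n; lra. Qed.

Lemma Gm_entry1 {R : realType} n (A : R -> 'M[R[i]]_n) t i j :
  cabs (A t i j) <= 1 + Gm A t.
Proof. exact/le_1sqr/Gm_entry. Qed.

Lemma csq_meas {R : realType} (f : R -> R[i]) :
  measC f -> measurable_fun (@Dm R) (fun t => csq (f t)).
Proof.
move=> [h1 h2]; apply: (measurable_funD (f := fun t => complex.Re (f t) ^+ 2) (g := fun t => complex.Im (f t) ^+ 2)); exact: measurable_funX.
Qed.

Lemma Gm_meas {R : realType} n (A : R -> 'M[R[i]]_n) :
  L2mx A -> measurable_fun (@Dm R) (Gm A).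
Proof.
move=> hA; rewrite /Gm.
apply: (measurable_sum (index_enum _) (h := fun i t => \sum_j csq (A t i j))) => i.
apply: (measurable_sum (index_enum _) (h := fun j t => csq (A t i j))) => j.
by have := csq_meas _ (hA i j).1.
Qed.

Lemma Dm_meas {R : realType} : measurable (@Dm R).
Proof. exact: measurable_itv. Qed.

Lemma Dm_mu {R : realType} : lebesgue_measure (@Dm R) = 1%:E.
Proof. by rewrite /Dm lebesgue_measure_itv /= lte_fin ltrN10 -EFinD opprK add0r. Qed.

Lemma csq_int {R : realType} (f : R -> R[i]) :
  L2fun f -> (\int[lebesgue_measure]_(t in @Dm R) (csq (f t))%:E < +oo)%E.
Proof.
move=> [_ h]; rewrite /Dm; apply: le_lt_trans h; apply: le_nnint => //.
- by move=> x _; rewrite lee_fin csq_ge0.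
- by move=> x _; rewrite lee_fin sqr_ge0.
- by move=> x Dx; split => //; rewrite cabs_sqr.
Qed.

Lemma Gm_int {R : realType} n (A : R -> 'M[R[i]]_n) :
  L2mx A -> exists J : R, 0 <= J /\
    (\int[lebesgue_measure]_(t in @Dm R) (Gm A t)%:E = J%:E)%E.
Proof.
move=> hA.
set I := (\int[lebesgue_measure]_(t in @Dm R) (Gm A t)%:E)%E.
have I0 : (0 <= I)%E by apply: integral_ge0 => x _; rewrite lee_fin Gm_ge0.
have Ifin : (I < +oo)%E.
  rewrite /I /Gm.
  under eq_integral => t _ do rewrite -sumEFin.
  rewrite ge0_integral_sum //; try exact: Dm_meas.
  2: { move=> i; apply/measurable_EFinP.
       apply: (measurable_sum (index_enum _) (h := fun j t => csq (A t i j))) => j.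
       by have := csq_meas _ (hA i j).1. }
  2: { by move=> i x _; rewrite lee_fin sumr_ge0 // => j _; exact: csq_ge0. }
  apply: lte_sum_pinfty => i _.
  under eq_integral => t _ do rewrite -sumEFin.
  rewrite ge0_integral_sum //; try exact: Dm_meas.
  2: { by move=> j; apply/measurable_EFinP; have := csq_meas _ (hA i j).1. }
  2: { by move=> j x _; rewrite lee_fin csq_ge0. }
  apply: lte_sum_pinfty => j _; exact: csq_int.
exists (fine I); split; first by rewrite fine_ge0.
by rewrite fineK // ge0_fin_numE.
Qed.

Lemma int_affine {R : realType} (a b : R) (g : R -> R) (J : R) :
  0 <= a -> 0 <= b -> measurable_fun (@Dm R) g -> (forall t, Dm t -> 0 <= g t) ->
  (\int[lebesgue_measure]_(t in @Dm R) (g t)%:E = J%:E)%E ->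
  (\int[lebesgue_measure]_(t in @Dm R) (a + b * g t)%:E = (a + b * J)%:E)%E.
Proof.
move=> a0 b0 mg g0 hJ.
under eq_integral => t _ do rewrite EFinD EFinM.
rewrite ge0_integralD //; try exact: Dm_meas.
2: by move=> t Dt; rewrite -EFinM lee_fin mulr_ge0 // g0.
2: by apply/measurable_EFinP; apply: measurable_funM => //; exact: measurable_cst.
rewrite ge0_integralZl_EFin //; try exact: Dm_meas.
2: exact/measurable_EFinP.
rewrite integral_cst; last exact: Dm_meas.
rewrite [X in (a%:E * X)%E](_ : _ = 1%:E); last exact: Dm_mu.
rewrite [X in (b%:E * X)%E](_ : _ = J%:E); last exact: hJ.
by rewrite mule1 -EFinM -EFinD.
Qed.

Lemma Dm_itv {R : realType} (t : R) : Dm t -> -1 <= t <= 0.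
Proof. by rewrite /Dm /= in_itv. Qed.

Lemma Re_opp {R : realType} (l : R[i]) : complex.Re (- l) = - complex.Re l.
Proof. by case: l. Qed.

Lemma cabs_expN_bound {R : realType} (l : R[i]) (rho : R) :
  `|complex.Re l| <= rho -> cabs (expC (- l)) <= expR rho.
Proof.
move=> h; rewrite cabs_expC Re_opp ler_expR; apply: le_trans h.
by rewrite -normrN ler_norm.
Qed.

Lemma int_cst_Dm {R : realType} (c : R) :
  (\int[lebesgue_measure]_(t in @Dm R) c%:E = c%:E)%E.
Proof.
rewrite integral_cst; last exact: Dm_meas.
by rewrite [X in (_ * X)%E](_ : _ = 1%:E) ?mule1 //; exact: Dm_mu.
Qed.

Lemma phi_bound {R : realType} n (Am1 : 'M[R[i]]_n) (l : R[i]) (x : 'cV[R[i]]_n) (rho : R) :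
  vnorm x = 1 -> `|complex.Re l| <= rho ->
  (M2sq (phi_v Am1 l x) (phi_f l x) <=
   (n%:R * \sum_i \sum_j (1 + expR rho * cabs (Am1 i j)) ^+ 2 + expR rho ^+ 2)%:E)%E.
Proof.
move=> hx hl; rewrite /M2sq EFinD; apply: leeD.
  rewrite lee_fin /phi_v; apply: le_trans (vnorm_mul_bound _ _ _ hx) _.
  apply: ler_wpM2l => //; apply: ler_sum => i _; apply: ler_sum => j _.
  rewrite !expr2; apply: ler_pM; try exact: cabs_ge0.
  - rewrite !mxE; apply: (le_trans (cabsB _ _)); apply: lerD; first exact: cabs_nat1.
    rewrite cabsM; apply: ler_wpM2r; first exact: cabs_ge0.
    exact: cabs_expN_bound.
  - rewrite !mxE; apply: (le_trans (cabsB _ _)); apply: lerD; first exact: cabs_nat1.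
    rewrite cabsM; apply: ler_wpM2r; first exact: cabs_ge0.
    exact: cabs_expN_bound.
rewrite -(int_cst_Dm (expR rho ^+ 2)).
apply: le_nnint.
- by move=> t _; rewrite lee_fin sqr_ge0.
- by move=> t _; rewrite lee_fin sqr_ge0.
move=> t Dt; split => //; rewrite lee_fin /phi_f vnorm_scale hx expr1n mulr1.
rewrite !expr2; apply: ler_pM; try exact: cabs_ge0;
by apply: expC_bound => //; exact: Dm_itv.
Qed.

Lemma intC_bound {R : realType} (t : R) (g : R -> R[i]) (h : R -> R) (H : R) :
  -1 <= t -> (forall s, Dm s -> 0 <= h s) ->
  (forall s, t <= s <= 0 -> cabs (g s) <= h s) ->
  (\int[lebesgue_measure]_(s in @Dm R) (h s)%:E = H%:E)%E ->
  cabs (intC t 0 g) <= H + H.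
Proof.
move=> t1 h0 hg hH; apply: (le_trans (cabs_complex _ _)).
have hD : forall s, `[t, 0]%classic s -> Dm s /\ t <= s <= 0.
  move=> s; rewrite /Dm /= !in_itv /= => /andP[ts s0].
  by split; apply/andP; split => //; apply: le_trans ts.
apply: lerD; apply: Rint_bound; rewrite -hH; apply: le_nnint.
- by move=> s _; rewrite lee_fin normr_ge0.
- by move=> s Ds; rewrite lee_fin h0.
- move=> s /hD [Ds hs]; split => //; rewrite lee_fin.
  exact: le_trans (Re_le _) (hg s hs).
- by move=> s _; rewrite lee_fin normr_ge0.
- by move=> s Ds; rewrite lee_fin h0.
- move=> s /hD [Ds hs]; split => //; rewrite lee_fin.
  exact: le_trans (Im_le _) (hg s hs).
Qed.

Lemma int_sum2 {R : realType} (g1 g2 : R -> R) (J1 J2 : R) :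
  measurable_fun (@Dm R) g1 -> measurable_fun (@Dm R) g2 ->
  (forall t, Dm t -> 0 <= g1 t) -> (forall t, Dm t -> 0 <= g2 t) ->
  (\int[lebesgue_measure]_(t in @Dm R) (g1 t)%:E = J1%:E)%E ->
  (\int[lebesgue_measure]_(t in @Dm R) (g2 t)%:E = J2%:E)%E ->
  (\int[lebesgue_measure]_(t in @Dm R) (g1 t + g2 t)%:E = (J1 + J2)%:E)%E.
Proof.
move=> m1 m2 p1 p2 h1 h2.
under eq_integral => t _ do rewrite EFinD.
rewrite ge0_integralD //; try exact: Dm_meas.
2,3: exact/measurable_EFinP.
rewrite [X in (X + _)%E](_ : _ = J1%:E); last exact: h1.
by rewrite [X in (_ + X)%E](_ : _ = J2%:E); [|exact: h2].
Qed.

Lemma Re_oppconj {R : realType} (l : R[i]) : complex.Re (- conjc l) = - complex.Re l.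
Proof. by case: l. Qed.

Lemma Re_conj {R : realType} (l : R[i]) : complex.Re (l^*%C) = complex.Re l.
Proof. by case: l. Qed.

Lemma entry_sq {R : realType} (u P c G : R) :
  0 <= u -> 0 <= P -> 0 <= c -> u <= P + c -> c ^+ 2 <= G -> u ^+ 2 <= 2 * P ^+ 2 + 2 * G.
Proof.
move=> u0 P0 c0 hu hc.
have h1 : u ^+ 2 <= (P + c) ^+ 2 by rewrite !expr2; apply: ler_pM.
have h2 := sqr_ge0 (P - c).
move: h1 h2; rewrite sqrrD sqrrB; lra.
Qed.

Lemma psi_bound {R : realType} n (A2 A3 : R -> 'M[R[i]]_n) (l : R[i])
  (y : 'cV[R[i]]_n) (rho J2 J3 H P : R) :
  L2mx A2 -> L2mx A3 -> 0 <= J2 -> 0 <= J3 ->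
  (\int[lebesgue_measure]_(t in @Dm R) (Gm A2 t)%:E = J2%:E)%E ->
  (\int[lebesgue_measure]_(t in @Dm R) (Gm A3 t)%:E = J3%:E)%E ->
  vnorm y = 1 -> `|complex.Re l| <= rho ->
  H = expR rho * (1 + cabs l) + expR rho * (1 + cabs l) * (J2 + J3) ->
  P = cabs l * expR rho + expR rho * (H + H) ->
  (M2sq y (psi_f A2 A3 l y) <=
   (1 + ((2 * n%:R ^+ 3) * P ^+ 2 + (2 * n%:R ^+ 3) * J2))%:E)%E.
Proof.
move=> hA2 hA3 J20 J30 hJ2 hJ3 hy hl hH hP.
set E := expR rho; set L := cabs l.
have E0 : 0 <= E by exact: expR_ge0.
have L0 : 0 <= L by exact: cabs_ge0.
have c0 : 0 <= E * (1 + L) by rewrite mulr_ge0 // addr_ge0.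
have hJ23 : (\int[lebesgue_measure]_(t in @Dm R) (Gm A2 t + Gm A3 t)%:E = (J2 + J3)%:E)%E.
  apply: int_sum2 => //; try exact: Gm_meas; by move=> t _; exact: Gm_ge0.
have hHint : (\int[lebesgue_measure]_(t in @Dm R)
    (E * (1 + L) + E * (1 + L) * (Gm A2 t + Gm A3 t))%:E = H%:E)%E.
  rewrite hH; apply: int_affine => //.
  - by apply: measurable_funD; exact: Gm_meas.
  - by move=> t _; rewrite addr_ge0 // Gm_ge0.
have H0 : 0 <= H by rewrite hH addr_ge0 // mulr_ge0 // addr_ge0.
have P0 : 0 <= P by rewrite hP addr_ge0 ?mulr_ge0 ?addr_ge0.
rewrite /M2sq hy expr1n EFinD; apply: leeD => //.
rewrite -(int_affine ((2 * n%:R ^+ 3) * P ^+ 2) (2 * n%:R ^+ 3) (Gm A2) J2) //; last 4 first.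
all: try (by rewrite mulr_ge0 ?sqr_ge0 ?mulr_ge0 ?exprn_ge0).
all: try exact: Gm_meas.
all: try (by move=> t _; exact: Gm_ge0).
apply: le_nnint.
- by move=> t _; rewrite lee_fin sqr_ge0.
- by move=> t _; rewrite lee_fin addr_ge0 ?mulr_ge0 ?exprn_ge0 ?sqr_ge0 ?Gm_ge0.
move=> t Dt; split => //; rewrite lee_fin.
have [t1 t0] := andP (Dm_itv _ Dt).
apply: (le_trans (vnorm_mul_bound _ _ _ hy)).
set e1 := expC (- l^*%C * RtoC t).
have he1 : cabs e1 <= E.
  apply: expC_bound => //; first by rewrite Re_oppconj normrN.
have hRec : `|complex.Re (l^*%C)| <= rho by rewrite Re_conj.
have key : forall i j, cabs (((l^*%C * e1) *: 1%:M - adjM (A2 t) + e1 *: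
            intM0 t (fun s : R =>
               expC (l^*%C * RtoC s) *: (adjM (A3 s) + l^*%C *: adjM (A2 s)))) i j)
           <= P + cabs (A2 t j i).
  move=> i j.
  have hint : cabs (intC t 0 (fun s => (expC (l^*%C * RtoC s) *:
                 (adjM (A3 s) + l^*%C *: adjM (A2 s))) i j)) <= H + H.
    apply: (intC_bound _ _ (fun s => E * (1 + L) + E * (1 + L) * (Gm A2 s + Gm A3 s))) => //.
      by move=> s _; rewrite addr_ge0 // mulr_ge0 // addr_ge0 // Gm_ge0.
    move=> s /andP[ts s0].
    rewrite /adjM !mxE cabsM.
    have hes : cabs (expC (l^*%C * RtoC s)) <= E.
      apply: expC_bound => //; apply/andP; split => //; exact: le_trans ts.
    have h3 := Gm_entry1 _ A3 s j i.
    have h2 := Gm_entry1 _ A2 s j i.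
    have hs : cabs ((A3 s j i)^*%C + l^*%C * (A2 s j i)^*%C) <= (1 + L) * (1 + (Gm A2 s + Gm A3 s)).
      apply: (le_trans (cabsD _ _)); rewrite cabsM !cabs_conj -/L.
      have g2 := Gm_ge0 _ A2 s; have g3 := Gm_ge0 _ A3 s.
      have hL2 : L * cabs (A2 s j i) <= L * (1 + Gm A2 s) by apply: ler_wpM2l.
      have hLg : 0 <= L * Gm A3 s by rewrite mulr_ge0.
      have -> : (1 + L) * (1 + (Gm A2 s + Gm A3 s)) =
        1 + Gm A3 s + L * (1 + Gm A2 s) + Gm A2 s + L * Gm A3 s by ring.
      lra.
    have -> : E * (1 + L) + E * (1 + L) * (Gm A2 s + Gm A3 s) =
       E * ((1 + L) * (1 + (Gm A2 s + Gm A3 s))) by ring.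
    apply: ler_pM => //; exact: cabs_ge0.
  rewrite /intM0 /intM !mxE.
  apply: (le_trans (cabsD _ _)); rewrite hP.
  have -> : L * E + E * (H + H) + cabs (A2 t j i) =
     (L * E + cabs (A2 t j i)) + E * (H + H) by ring.
  apply: lerD; last first.
    rewrite cabsM cabsN; apply: ler_pM => //; exact: cabs_ge0.
  apply: (le_trans (cabsB _ _)); rewrite cabs_conj; apply: lerD => //.
  rewrite cabsM (cabsM (l^*%C) e1) cabs_conj -/L -[X in _ <= X]mulr1; apply: ler_pM.
  - by rewrite mulr_ge0 // cabs_ge0.
  - exact: cabs_ge0.
  - by rewrite ler_wpM2l.
  - exact: cabs_nat1.
rewrite (_ : 2 * n%:R ^+ 3 * P ^+ 2 + 2 * n%:R ^+ 3 * Gm A2 t =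
   n%:R * \sum_(i < n) \sum_(j < n) (2 * P ^+ 2 + 2 * Gm A2 t)); last first.
  rewrite !sumr_const card_ord.
  set z := 2 * P ^+ 2 + 2 * Gm A2 t.
  rewrite -(mulr_natr z n) -(mulr_natr (z * n%:R) n) /z; ring.
apply: ler_wpM2l => //; apply: ler_sum => i _; apply: ler_sum => j _.
apply: (entry_sq _ P (cabs (A2 t j i))) => //; try exact: cabs_ge0.
exact: Gm_entry.
Qed.

Lemma r_bound {R : realType} (r : int -> R) (B : R) :
  (forall K : nat, \sum_(i < (K + K).+1) (r (i%:Z - K%:Z)) ^+ 2 <= B) ->
  forall k, r k <= 1 + B.
Proof.
move=> hB k; apply: le_1sqr.
have hge : forall K (i : 'I_(K + K).+1), r (i%:Z - K%:Z) ^+ 2 <= B.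
  move=> K i; apply: le_trans (hB K); rewrite (bigD1 i) //= lerDl.
  by apply: sumr_ge0 => j _; exact: sqr_ge0.
case: k => p.
  have := hge p (Ordinal (ltnSn (p + p))); rewrite /=.
  by rewrite PoszD addrK.
have := hge p.+1 (Ordinal (ltn0Sn (p.+1 + p.+1))); rewrite /=.
by rewrite sub0r NegzE.
Qed.

Lemma Re_subt {R : realType} (z : R[i]) (c : R) : complex.Re (z - Complex 0 c) = complex.Re z.
Proof. by case: z => a b; rewrite /= subr0. Qed.

Lemma Im_subt {R : realType} (z : R[i]) (c : R) : complex.Im (z - Complex 0 c) = complex.Im z - c.
Proof. by case: z. Qed.

Lemma lower_bound {R : realType} (l1 N K1 : nat) (lam : 'I_l1 -> int -> R[i])
  (mu : 'I_l1 -> R[i]) :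
  (forall m k, (N <= `|k|)%N -> (K1 <= `|k|)%N -> cabs (lam m k - tlam (mu m) k) < 1) ->
  (forall m k, (N <= `|k|)%N -> lam m k != 0) ->
  exists D : R, 0 <= D /\ forall m k, (N <= `|k|)%N -> 1 <= D * cabs (lam m k).
Proof.
move=> hlim hnz.
set A := \sum_m `|argC (mu m)|.
have hA : forall m, `|argC (mu m)| <= A.
  move=> m; rewrite /A (bigD1 m) //= lerDl.
  by apply: sumr_ge0 => j _; exact: normr_ge0.
have pi0 : 0 < 2 * pi :> R by rewrite mulr_gt0 // pi_gt0.
have A0 : 0 <= A by apply: sumr_ge0 => j _; exact: normr_ge0.
have x0 : 0 <= (A + 2) / (2 * pi) by rewrite divr_ge0 // ?addr_ge0 // ltW.
have hK2 := archi_boundP x0.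
set K2 := Num.Def.archi_bound _ in hK2.
have hK2' : A + 2 <= 2 * pi * K2%:R.
  by rewrite ltr_pdivrMr // in hK2; rewrite mulrC ltW.
set Kb := maxn K1 K2.
set S := \sum_m \sum_(i < (Kb + Kb).+1) (cabs (lam m (i%:Z - Kb%:Z)))^-1.
have S0 : 0 <= S.
  apply: sumr_ge0 => m _; apply: sumr_ge0 => i _; rewrite invr_ge0; exact: cabs_ge0.
exists (1 + S); split; first by rewrite addr_ge0.
move=> m k hk.
have L0 : 0 <= cabs (lam m k) by exact: cabs_ge0.
have hSL : 0 <= S * cabs (lam m k) by rewrite mulr_ge0.
rewrite mulrDl mul1r.
case: (leqP Kb `|k|) => hKb.
- have hK1 : (K1 <= `|k|)%N by apply: leq_trans hKb; exact: leq_maxl.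
  have hK2k : (K2 <= `|k|)%N by apply: leq_trans hKb; exact: leq_maxr.
  have h1 := hlim m k hk hK1.
  have hIm := Im_le (lam m k - tlam (mu m) k).
  rewrite /tlam Im_subt in hIm.
  have hIl := Im_le (lam m k).
  have ha := hA m.
  have hw : A + 2 <= `|2 * pi * k%:~R|.
    rewrite normrM (ger0_norm (ltW pi0)) -intr_norm -natr_absz.
    apply: le_trans hK2' _; apply: ler_wpM2l; first exact: ltW.
    by rewrite ler_nat.
  have hu := le_lt_trans hIm h1.
  move: hu hw ha hIl hSL.
  set u := complex.Im (lam m k); set a := argC (mu m); set w := 2 * pi * k%:~R.
  set c := cabs (lam m k).
  move=> hu hw ha hIl hSL'.
  have hu1 : 1 <= `|u|.
    move: hu ha; rewrite ltr_norml ler_norml => /andP[hu1 hu2] /andP[ha1 ha2].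
    rewrite ler_normr; move: hw; rewrite ler_normr => /orP[hw|hw].
      by apply/orP; left; lra.
    by apply/orP; right; lra.
  lra.
- have hk' : (0 <= k + Kb%:Z)%R by lia.
  set i := absz (k + Kb%:Z).
  have hi : (i < (Kb + Kb).+1)%N by rewrite /i; lia.
  have hik : i%:Z - Kb%:Z = k by rewrite /i; lia.
  have hterm : (cabs (lam m k))^-1 <= S.
    rewrite /S (bigD1 m) //= (bigD1 (Ordinal hi)) //= hik -addrA lerDl.
    apply: addr_ge0.
      by apply: sumr_ge0 => j _; rewrite invr_ge0; exact: cabs_ge0.
    apply: sumr_ge0 => m' _; apply: sumr_ge0 => j _; rewrite invr_ge0; exact: cabs_ge0.
  have Lne : cabs (lam m k) != 0.
    apply/eqP => /ComplexField.Normc.eq0_normc h; move: (hnz m k hk); by rewrite h eqxx.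
  have : 1 <= S * cabs (lam m k).
    rewrite -(mulVf Lne); apply: ler_wpM2r => //.
  lra.
Qed.

Lemma final_alg {R : realType} (L D alpha beta c J2 P K C : R) :
  0 <= L -> 0 <= D -> 0 <= c -> 0 <= J2 -> 1 <= D * L ->
  P = L * alpha + beta ->
  K = D ^+ 2 + 2 * c * alpha ^+ 2 + 2 * c * beta ^+ 2 * D ^+ 2 + c * J2 * D ^+ 2 ->
  K <= C -> 1 <= C ->
  1 + (c * P ^+ 2 + c * J2) <= (C * L) ^+ 2.
Proof.
move=> L0 D0 c0 J0 hDL hP hK hKC hC.
set Y := (D * L) ^+ 2.
have hY : 1 <= Y by rewrite /Y expr2 -[1](mulr1 1); apply: ler_pM.
have hP2 : P ^+ 2 <= 2 * L ^+ 2 * alpha ^+ 2 + 2 * beta ^+ 2.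
  have := sqr_ge0 (L * alpha - beta); rewrite hP; move=> h.
  have e1 : (L * alpha + beta) ^+ 2 = 2 * L ^+ 2 * alpha ^+ 2 + 2 * beta ^+ 2 - (L * alpha - beta) ^+ 2 by ring.
  rewrite e1; lra.
have h1 : c * P ^+ 2 <= c * (2 * L ^+ 2 * alpha ^+ 2 + 2 * beta ^+ 2) by apply: ler_wpM2l.
have cb : 0 <= c * beta ^+ 2 by rewrite mulr_ge0 // sqr_ge0.
have cj : 0 <= c * J2 by rewrite mulr_ge0.
have h2 : c * beta ^+ 2 <= c * beta ^+ 2 * Y.
  by rewrite -[X in X <= _]mulr1; apply: ler_wpM2l.
have h3 : c * J2 <= c * J2 * Y.
  by rewrite -[X in X <= _]mulr1; apply: ler_wpM2l.
have eK : K * L ^+ 2 = Y + 2 * c * alpha ^+ 2 * L ^+ 2 + 2 * (c * beta ^+ 2 * Y) + c * J2 * Y.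
  by rewrite hK /Y; ring.
have hL2 : 0 <= L ^+ 2 by exact: sqr_ge0.
have h4 : K * L ^+ 2 <= (C * L) ^+ 2.
  rewrite exprMn; apply: ler_wpM2r => //; apply: (le_trans hKC).
  by rewrite expr2 -[X in X <= _]mulr1; apply: ler_wpM2l => //; lra.
apply: le_trans h4; rewrite eK.
have e2 : c * (2 * L ^+ 2 * alpha ^+ 2 + 2 * beta ^+ 2) = 2 * c * alpha ^+ 2 * L ^+ 2 + 2 * (c * beta ^+ 2) by ring.
rewrite e2 in h1.
lra.
Qed.

Theorem lemma4 (R : realType) (n : nat) (n_gt0 : (0 < n)%N)
  (Am1 : 'M[R[i]]_n) (A2 A3 : R -> 'M[R[i]]_n)
  (hA2 : L2mx A2) (hA3 : L2mx A3)
  (* sigma_1 = sigma(A_{-1}) \cap {|mu| = 1} = {mu_1, ..., mu_l1}, distinct *)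
  (l1 : nat) (mu : 'I_l1 -> R[i])
  (hmu_inj : injective mu)
  (hsigma1 : forall z : R[i],
      (root (char_poly Am1) z /\ cabs z = 1) <-> exists m, z = mu m)
  (* sigma_1 consists of simple eigenvalues *)
  (hsimple : forall m, mup (mu m) (char_poly Am1) = 1%N)
  (* known facts: N_1, radii r^(k) with square-summable radii, and the roots
     lambda_m^k of det Delta *)
  (N1 : nat) (r : int -> R) (hr_pos : forall k, 0 < r k)
  (hr_sum : exists B : R, forall K : nat,
      \sum_(i < (K + K).+1) (r (i%:Z - K%:Z)) ^+ 2 <= B)
  (lam : 'I_l1 -> int -> R[i])
  (hlam_disc : forall m k, (N1 <= `|k|)%N ->
      cabs (lam m k - tlam (mu m) k) < r k)
  (hlam_root : forall m k, (N1 <= `|k|)%N ->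
      simple_rootC (fun z => \det (Delta Am1 A2 A3 z)) (lam m k))
  (hlam_unique : forall m k, (N1 <= `|k|)%N -> forall z : R[i],
      cabs (z - tlam (mu m) k) < r k -> \det (Delta Am1 A2 A3 z) = 0 ->
      z = lam m k)
  (hlam_lim : forall eps : R, 0 < eps -> exists K : nat, forall m k,
      (N1 <= `|k|)%N -> (K <= `|k|)%N ->
      cabs (lam m k - tlam (mu m) k) < eps)
  (* the statement proper *)
  (N : nat) (hN : (N1 <= N)%N)
  (hlam_nz : forall m k, (N <= `|k|)%N -> lam m k != 0)
  (x y : 'I_l1 -> int -> 'cV[R[i]]_n)
  (hx : forall m k, (N <= `|k|)%N ->
      Delta Am1 A2 A3 (lam m k) *m x m k = 0 /\ vnorm (x m k) = 1)
  (hy : forall m k, (N <= `|k|)%N ->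
      DeltaS Am1 A2 A3 (conjc (lam m k)) *m y m k = 0 /\ vnorm (y m k) = 1) :
  exists C : R, 0 < C /\
    forall m k, (N <= `|k|)%N ->
      (M2sq (phi_v Am1 (lam m k) (x m k)) (phi_f (lam m k) (x m k))
         <= (C ^+ 2)%:E)%E /\
      (M2sq (y m k) (psi_f A2 A3 (lam m k) (y m k))
         <= ((C * cabs (lam m k)) ^+ 2)%:E)%E.
Proof.
have [B hB] := hr_sum.
set rho := 1 + B.
have hRe : forall m k, (N <= `|k|)%N -> `|complex.Re (lam m k)| <= rho.
  move=> m k hk; have hk1 : (N1 <= `|k|)%N := leq_trans hN hk.
  have h2 := hlam_disc m k hk1; have h1 := Re_le (lam m k - tlam (mu m) k).
  rewrite /tlam Re_subt in h1.
  apply: le_trans (r_bound r B hB k); exact: ltW (le_lt_trans h1 h2).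
have [K1 hK1] := hlam_lim 1 ltr01.
have [D [D0 hD]] : exists D : R, 0 <= D /\ forall m k, (N <= `|k|)%N -> 1 <= D * cabs (lam m k).
  apply: (lower_bound l1 N K1 lam mu); last exact: hlam_nz.
  move=> m k hk hk'.
  by apply: hK1 => //; exact: leq_trans hN hk.
have [J2 [J20 hJ2]] := Gm_int n A2 hA2.
have [J3 [J30 hJ3]] := Gm_int n A3 hA3.
set E := expR rho.
have E0 : 0 <= E by exact: expR_ge0.
set Kphi := n%:R * \sum_i \sum_j (1 + E * cabs (Am1 i j)) ^+ 2 + E ^+ 2.
set alpha := E + 2 * E ^+ 2 * (1 + (J2 + J3)).
set beta := 2 * E ^+ 2 * (1 + (J2 + J3)).
set c := 2 * n%:R ^+ 3 :> R.
set Kpsi := D ^+ 2 + 2 * c * alpha ^+ 2 + 2 * c * beta ^+ 2 * D ^+ 2 + c * J2 * D ^+ 2.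
have c0 : 0 <= c by rewrite mulr_ge0 // exprn_ge0.
have Kphi0 : 0 <= Kphi.
  by rewrite addr_ge0 ?sqr_ge0 // mulr_ge0 // sumr_ge0 // => i _; rewrite sumr_ge0 // => j _; rewrite sqr_ge0.
have J230 : 0 <= 1 + (J2 + J3) by rewrite !addr_ge0.
have beta0 : 0 <= beta by rewrite /beta !mulr_ge0 // sqr_ge0.
have alpha0 : 0 <= alpha by rewrite /alpha addr_ge0.
have Kpsi0 : 0 <= Kpsi.
  by rewrite /Kpsi !addr_ge0 ?sqr_ge0 // !mulr_ge0 // ?sqr_ge0.
exists (1 + Kphi + Kpsi); split; first by rewrite ltr_pwDl // ltr_pwDl.
move=> m k hk; split.
- apply: (le_trans (phi_bound n Am1 (lam m k) (x m k) rho (hx m k hk).2 (hRe m k hk))).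
  rewrite lee_fin -/E -/Kphi.
  have hC : 1 <= 1 + Kphi + Kpsi by lra.
  have : 1 + Kphi + Kpsi <= (1 + Kphi + Kpsi) ^+ 2.
    by rewrite expr2 -[X in X <= _]mulr1; apply: ler_wpM2l => //; lra.
  lra.
- apply: (le_trans (psi_bound n A2 A3 (lam m k) (y m k) rho J2 J3 _ _ hA2 hA3 J20 J30 hJ2 hJ3
     (hy m k hk).2 (hRe m k hk) erefl erefl)).
  rewrite lee_fin -/E -/c.
  apply: (final_alg _ D alpha beta _ _ _ Kpsi) => //.
  - exact: cabs_ge0.
  - exact: hD.
  - by rewrite /alpha /beta; ring.
  - lra.
  - lra.
Qed.
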